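(* Let $d$ be a positive integer, let $\kappa,\mu,\nu$ be $d$-partitions with $\mu\succ\kappa\prec\nu$, and let $m$ be a nonnegative integer such that $\kappa_d=0$ or $m=0$. Then there exists a unique $d$-partition $\rho$ such that the cell with entry $m$ and bottom-left, top-left, bottom-right, top-right corners $\kappa,\mu,\nu,\rho$ satisfies the $d$-RSK local rule.
   Context: Partitions: finite weakly decreasing sequences of positive integers, $\lambda_i=0$ for $i>\ell(\lambda)$; $d$-partitions have $\ell\le d$; $\alpha\prec\beta$ (also $\beta\succ\alpha$) means $\beta_1\ge\alpha_1\ge\beta_2\ge\alpha_2\ge\cdots$. The $d$-RSK local rule for a cell with entry $m$ and corners $\kappa$ (bottom-left), $\mu$ (top-left), $\nu$ (bottom-right), $\rho$ (top-right) requires: all four are $d$-partitions, $\mu\succ\kappa\prec\nu$, $\mu\prec\rho\succ\nu$, $m=0$ or $\kappa_d=0$, $\rho_1+\kappa_d=m+\min(\mu_d,\nu_d)+\max(\mu_1,\nu_1)$, and $\rho_i+\kappa_{i-1}=\min(\mu_{i-1},\nu_{i-1})+\max(\mu_i,\nu_i)$ for $2\le i\le d$. *)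

(* Defs.v *)
From mathcomp Require Import all_boot.

Set Implicit Arguments. Unset Strict Implicit. Unset Printing Implicit Defensive.

Definition is_partition (s : seq nat) : bool :=
  sorted geq s && all (fun x => 0 < x) s.

Definition dpartition (d : nat) (s : seq nat) : bool :=
  is_partition s && (size s <= d).

(* 1-indexed part lambda_i; equals 0 for i > length (and for i = 0 by convention,
   index 0 is never used in the statements below). *)
Definition part (s : seq nat) (i : nat) : nat := nth 0 s i.-1.

(* interlace a b : a ≺ b, i.e. b_1 >= a_1 >= b_2 >= a_2 >= ... *)
Definition interlace (a b : seq nat) : Prop :=
  forall i, 1 <= i -> part b i >= part a i /\ part a i >= part b i.+1.

Definition rsk_local_rule (d m : nat) (kappa mu nu rho : seq nat) : Prop :=
  [/\ dpartition d kappa, dpartition d mu, dpartition d nu & dpartition d rho] /\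
  [/\ interlace kappa mu, interlace kappa nu, interlace mu rho & interlace nu rho] /\
  ((m == 0) || (part kappa d == 0)) /\
  part rho 1 + part kappa d
    = m + minn (part mu d) (part nu d) + maxn (part mu 1) (part nu 1) /\
  (forall i, 2 <= i <= d ->
     part rho i + part kappa i.-1
       = minn (part mu i.-1) (part nu i.-1) + maxn (part mu i) (part nu i)).

(* Main.v *)
Require Import Defs.
From mathcomp Require Import all_boot.
From mathcomp Require Import zify.

Lemma geq_tr : transitive geq.
Proof. move=> a b c /= h1 h2; exact: leq_trans h2 h1. Qed.

Lemma nth_filter_pos (s : seq nat) j : sorted geq s ->
  nth 0 [seq x <- s | 0 < x] j = nth 0 s j.
Proof.
elim: s j => [|x s IH] j //= Hs.
have Hs' := path_sorted Hs.
case: (posnP x) => [x0 | xpos].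
- have Hall := order_path_min geq_tr Hs.
  have all0 : forall k, nth 0 (x::s) k = 0.
    case=> [|k] /=; first by [].
    case: (ltnP k (size s)) => H.
    + move/allP: Hall => /(_ _ (mem_nth 0 H)) /=. rewrite x0. lia.
    + by rewrite nth_default.
  rewrite x0 /= IH //. have := all0 j.+1; have := all0 j. rewrite x0 /= => -> -> //.
- case: j => [|j] //=. exact: IH.
Qed.

Lemma part_pos s j : is_partition s -> (0 < nth 0 s j) = (j < size s).
Proof.
case/andP=> _ Hall.
case: (ltnP j (size s)) => H.
- by move/allP: Hall => /(_ _ (mem_nth 0 H)).
- by rewrite nth_default.
Qed.

Lemma part_big d s i : dpartition d s -> d < i -> part s i = 0.
Proof.
case/andP=> _ Hs Hi. rewrite /part nth_default //. 
apply: leq_trans Hs _. lia.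
Qed.

Lemma dpart_eq d s t : dpartition d s -> dpartition d t ->
  (forall i, 1 <= i <= d -> part s i = part t i) -> s = t.
Proof.
move=> Hs Ht H.
have Hn : forall j, nth 0 s j = nth 0 t j.
  move=> j. case: (ltnP j d) => Hj.
  - have := H j.+1. rewrite /part /=. apply. lia.
  - move: Hs Ht => /andP [_ Hs] /andP [_ Ht].
    rewrite !nth_default //; apply: leq_trans Hj; done.
move: Hs Ht => /andP [Ps _] /andP [Pt _].
have Hsz : size s = size t.
  case: (ltngtP (size s) (size t)) => // Hl.
  - have := @part_pos t (size s) Pt. by rewrite -Hn Hl (@part_pos s _ Ps) ltnn.
  - have := @part_pos s (size t) Ps. by rewrite Hn Hl (@part_pos t _ Pt) ltnn.
apply: (eq_from_nth (x0 := 0) Hsz) => j _. exact: Hn.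
Qed.

Theorem lemma6p1 (d : nat) (kappa mu nu : seq nat) (m : nat) :
  0 < d ->
  dpartition d kappa -> dpartition d mu -> dpartition d nu ->
  interlace kappa mu -> interlace kappa nu ->
  (part kappa d == 0) || (m == 0) ->
  exists! rho : seq nat, rsk_local_rule d m kappa mu nu rho.
Proof.
move=> d0 Dk Dm Dn Ikm Ikn Hm.
set K := part kappa. set M := part mu. set N := part nu.
pose g i := if i <= d then
   (if i == 1 then m + minn (M d) (N d) + maxn (M 1) (N 1) - K d
    else minn (M i.-1) (N i.-1) + maxn (M i) (N i) - K i.-1) else 0.
have gM : forall i, 1 <= i <= d -> maxn (M i) (N i) <= g i.
  move=> i /andP [i1 id]. rewrite /g id.
  case: ifP => /eqP Hi.
  - have := Ikm d d0; have := Ikn d d0. rewrite -/K -/M -/N. subst i; lia.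
  - have := Ikm i.-1; have := Ikn i.-1. rewrite -/K -/M -/N. 
    move=> h1 h2. have := h1 ltac:(lia); have := h2 ltac:(lia). lia.
have Mg : forall i, 1 <= i -> g i.+1 <= minn (M i) (N i).
  move=> i i1. rewrite /g. case: ifP => // id. 
  have -> : (i.+1 == 1) = false by apply/eqP; lia.
  have := Ikm i i1; have := Ikn i i1. rewrite -/K -/M -/N /=. lia.
have g0 : forall j, d < j -> g j = 0.
  move=> j Hj. rewrite /g. case: ifP => //. lia.
pose s := mkseq (fun j => g j.+1) d.
have Ss : sorted geq s.
  apply/(sortedP 0) => j. rewrite size_mkseq => Hj.
  rewrite !nth_mkseq /=; try lia.
  have := Mg j.+1 erefl; have := gM j.+1 ltac:(lia). lia.
pose rho := [seq x <- s | 0 < x].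
have Prho : forall i, 1 <= i -> part rho i = g i.
  move=> i i1. rewrite /part nth_filter_pos //.
  case: (ltnP i.-1 d) => H.
  - rewrite nth_mkseq //. by rewrite prednK.
  - rewrite nth_default ?size_mkseq // /g. case: ifP => //. lia.
have Drho : dpartition d rho.
  apply/andP; split; last by rewrite size_filter (leq_trans (count_size _ _)) // size_mkseq.
  apply/andP; split; first exact: (sorted_filter geq_tr _ Ss).
  exact: filter_all.
exists rho; split.
- split; first by split.
  split.
    split => // i i1; rewrite Prho //; rewrite Prho //.
    + case: (leqP i d) => id.
      * have := gM i ltac:(lia). have := Mg i i1. rewrite -/M. lia.
      * rewrite !g0 ?(@part_big d mu i Dm id); lia.
    + case: (leqP i d) => id.
      * have := gM i ltac:(lia). have := Mg i i1. rewrite -/N. lia.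
      * rewrite !g0 ?(@part_big d nu i Dn id); lia.
  split; first by rewrite orbC.
  split.
    rewrite Prho // /g d0 eqxx. have := Ikm d d0; have := Ikn d d0.
    rewrite -/K -/M -/N. lia.
  move=> i /andP [i2 id]. rewrite Prho; last lia.
  rewrite /g id. have -> : (i == 1) = false by apply/eqP; lia.
  have := Ikm i.-1 ltac:(lia); have := Ikn i.-1 ltac:(lia).
  rewrite -/K -/M -/N. lia.
- move=> r [[_ _ _ Dr] [_ [_ [E1 E2]]]].
  apply: dpart_eq Drho Dr _ => i /andP [i1 id].
  rewrite Prho // /g id.
  case: ifP => /eqP Hi.
  + subst i. move: E1. rewrite -/K -/M -/N. lia.
  + have := E2 i ltac:(lia). rewrite -/K -/M -/N. lia.
Qed.
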